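(* Let $f:\mathbb{R}^n\to\mathbb{R}\cup\{\infty\}$ be a proper lower semicontinuous function with $\bar x\in\operatorname{dom} f$ and $0\in\partial f(\bar x)$, and suppose $f$ is subdifferentially continuous, prox-regular, and twice epi-differentiable at $\bar x$ for $0$. Then $\bar x$ is a strong local minimizer of $f$ if and only if the sufficient condition of the second kind holds at $\bar x$, i.e., there exists $\kappa>0$ such that for each $w\in\operatorname{dom}D(\partial_p f)(\bar x|0)$ with $\|w\|=1$ there exists $z\in D(\partial_p f)(\bar x|0)(w)$ with $\langle z,w\rangle\ge\kappa$.
   Context: Limiting subdifferential $\partial f$, proximal subdifferential $\partial_p f(\bar x)=\{v\mid \liminf_{x\to\bar x}\frac{f(x)-f(\bar x)-\langle v,x-\bar x\rangle}{\|x-\bar x\|^2}>-\infty\}$. $D(\partial_p f)(\bar x|0)(w)=\{z\mid (w,z)\in T_{\operatorname{gph}\partial_p f}(\bar x,0)\}$ with $T$ the contingent cone $T_\Omega(\bar u)=\{v\mid \exists t_k\downarrow0,\ v_k\to v,\ \bar u+t_kv_k\in\Omega\}$. Prox-regularity at $\bar x$ for $\bar v$: there are $r,\varepsilon>0$ with $f(x)\ge f(u)+\langle v,x-u\rangle-\frac r2\|x-u\|^2$ for $x,u\in\mathbb{B}_\varepsilon(\bar x)$, $|f(u)-f(\bar x)|<\varepsilon$, $v\in\partial f(u)\cap\mathbb{B}_\varepsilon(\bar v)$. Subdifferential continuity: $(x_k,v_k)\to(\bar x,\bar v)$, $v_k\in\partial f(x_k)$ imply $f(x_k)\to f(\bar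 x)$. Twice epi-differentiability at $\bar x$ for $v$: for every $w$ and $\tau_k\downarrow0$ there are $w^k\to w$ with $\frac{f(\bar x+\tau_kw^k)-f(\bar x)-\tau_k\langle v,w^k\rangle}{\tau_k^2/2}\to d^2f(\bar x|v)(w)$, where $d^2f(\bar x|v)(w)=\liminf_{\tau\downarrow0,w'\to w}\frac{f(\bar x+\tau w')-f(\bar x)-\tau\langle v,w'\rangle}{\tau^2/2}$. Strong local minimizer: $f(x)-f(\bar x)\ge\frac\kappa2\|x-\bar x\|^2$ near $\bar x$ for some $\kappa>0$. *)

(* Defs.v *)
From Stdlib Require Import Reals.
From Stdlib Require Vectors.Fin.
Open Scope R_scope.

Definition vec (n : nat) : Type := Fin.t n -> R.

Fixpoint fsum (n : nat) : (Fin.t n -> R) -> R :=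
  match n return (Fin.t n -> R) -> R with
  | O => fun _ => 0
  | S m => fun g => g Fin.F1 + fsum m (fun i => g (Fin.FS i))
  end.

Definition vzero {n} : vec n := fun _ => 0.
Definition vadd {n} (x y : vec n) : vec n := fun i => x i + y i.
Definition vsub {n} (x y : vec n) : vec n := fun i => x i - y i.
Definition vscal {n} (a : R) (x : vec n) : vec n := fun i => a * x i.
Definition dot {n} (x y : vec n) : R := fsum n (fun i => x i * y i).
Definition vnorm {n} (x : vec n) : R := sqrt (dot x x).

Definition vcv {n} (u : nat -> vec n) (l : vec n) : Prop :=
  forall eps, 0 < eps -> exists N, forall k, (N <= k)%nat -> vnorm (vsub (u k) l) < eps.

Definition pos_dec_to0 (t : nat -> R) : Prop :=
  (forall k, 0 < t k) /\ (forall k, t (S k) <= t k) /\ Un_cv t 0.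

(* values of f : R U {+oo} *)
Inductive ereal : Type := EFin (r : R) | EInf.
Inductive xreal : Type := XFin (r : R) | XPInf | XMInf.

Definition ege (a : ereal) (r : R) : Prop :=
  match a with EFin x => r <= x | EInf => True end.
Definition egt (a : ereal) (r : R) : Prop :=
  match a with EFin x => r < x | EInf => True end.
Definition elt (a : ereal) (r : R) : Prop :=
  match a with EFin x => x < r | EInf => False end.
Definition xgt (a : xreal) (r : R) : Prop :=
  match a with XFin x => r < x | XPInf => True | XMInf => False end.
Definition xlt (a : xreal) (r : R) : Prop :=
  match a with XFin x => x < r | XPInf => False | XMInf => True end.

Definition ecv_real (a : nat -> ereal) (l : R) : Prop :=
  forall eps, 0 < eps -> exists N, forall k, (N <= k)%nat ->
    exists r, a k = EFin r /\ Rabs (r - l) < eps.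

Definition ecv_x (a : nat -> ereal) (l : xreal) : Prop :=
  match l with
  | XFin r => ecv_real a r
  | XPInf => forall M, exists N, forall k, (N <= k)%nat -> egt (a k) M
  | XMInf => forall M, exists N, forall k, (N <= k)%nat -> elt (a k) M
  end.

Definition proper {n} (f : vec n -> ereal) : Prop := exists x, f x <> EInf.

Definition in_dom {n} (f : vec n -> ereal) (x : vec n) : Prop := exists r, f x = EFin r.

Definition lsc {n} (f : vec n -> ereal) : Prop :=
  forall x (a : R), egt (f x) a ->
    exists delta, 0 < delta /\ forall y, vnorm (vsub y x) < delta -> egt (f y) a.

Definition reg_subdiff {n} (f : vec n -> ereal) (x v : vec n) : Prop :=
  exists fx, f x = EFin fx /\
  forall eps, 0 < eps -> exists delta, 0 < delta /\
    forall y, vnorm (vsub y x) < delta ->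
      ege (f y) (fx + dot v (vsub y x) - eps * vnorm (vsub y x)).

Definition lim_subdiff {n} (f : vec n -> ereal) (x v : vec n) : Prop :=
  exists fx, f x = EFin fx /\
  exists (xk vk : nat -> vec n),
    vcv xk x /\ vcv vk v /\ ecv_real (fun k => f (xk k)) fx /\
    forall k, reg_subdiff f (xk k) (vk k).

(* proximal subdifferential: the liminf of the quotient is > -oo *)
Definition prox_subdiff {n} (f : vec n -> ereal) (x v : vec n) : Prop :=
  exists fx, f x = EFin fx /\
  exists M delta, 0 < delta /\
    forall y, 0 < vnorm (vsub y x) < delta ->
      ege (f y) (fx + dot v (vsub y x) - M * (vnorm (vsub y x))^2).

(* (w, z) in the contingent cone to gph d_p f at (xbar, vbar), i.e.
   z in D(d_p f)(xbar | vbar)(w) *)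
Definition graph_deriv_prox {n} (f : vec n -> ereal) (xbar vbar w z : vec n) : Prop :=
  exists (t : nat -> R) (wk zk : nat -> vec n),
    pos_dec_to0 t /\ vcv wk w /\ vcv zk z /\
    forall k, prox_subdiff f (vadd xbar (vscal (t k) (wk k)))
                             (vadd vbar (vscal (t k) (zk k))).

Definition dom_graph_deriv_prox {n} (f : vec n -> ereal) (xbar vbar w : vec n) : Prop :=
  exists z, graph_deriv_prox f xbar vbar w z.

Definition prox_regular {n} (f : vec n -> ereal) (xbar vbar : vec n) : Prop :=
  exists fx, f xbar = EFin fx /\
  exists r eps, 0 < r /\ 0 < eps /\
    forall x u v fu,
      vnorm (vsub x xbar) <= eps -> vnorm (vsub u xbar) <= eps ->
      f u = EFin fu -> Rabs (fu - fx) < eps ->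
      lim_subdiff f u v -> vnorm (vsub v vbar) <= eps ->
      ege (f x) (fu + dot v (vsub x u) - r / 2 * (vnorm (vsub x u))^2).

Definition subdiff_continuous {n} (f : vec n -> ereal) (xbar vbar : vec n) : Prop :=
  exists fx, f xbar = EFin fx /\
  forall (xk vk : nat -> vec n),
    vcv xk xbar -> vcv vk vbar -> (forall k, lim_subdiff f (xk k) (vk k)) ->
    ecv_real (fun k => f (xk k)) fx.

Definition q2 {n} (f : vec n -> ereal) (xbar v : vec n) (fx tau : R) (w : vec n) : ereal :=
  match f (vadd xbar (vscal tau w)) with
  | EFin y => EFin ((y - fx - tau * dot v w) / (tau ^ 2 / 2))
  | EInf => EInf
  end.

(* a = d^2 f(xbar | v)(w) = liminf_{tau -> 0+, w' -> w} q2 tau w' *)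
Definition is_d2 {n} (f : vec n -> ereal) (xbar v : vec n) (fx : R) (w : vec n) (a : xreal) : Prop :=
  (forall b : R, xgt a b -> exists delta, 0 < delta /\
      forall tau w', 0 < tau < delta -> vnorm (vsub w' w) < delta ->
        egt (q2 f xbar v fx tau w') b) /\
  (forall b : R, xlt a b -> forall delta, 0 < delta ->
      exists tau w', 0 < tau < delta /\ vnorm (vsub w' w) < delta /\
        elt (q2 f xbar v fx tau w') b).

Definition twice_epi_diff {n} (f : vec n -> ereal) (xbar v : vec n) : Prop :=
  exists fx, f xbar = EFin fx /\
  forall (w : vec n) (a : xreal), is_d2 f xbar v fx w a ->
    forall tau : nat -> R, pos_dec_to0 tau ->
      exists wk : nat -> vec n, vcv wk w /\
        ecv_x (fun k => q2 f xbar v fx (tau k) (wk k)) a.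

Definition strong_local_min {n} (f : vec n -> ereal) (xbar : vec n) : Prop :=
  exists fx, f xbar = EFin fx /\
  exists kappa delta, 0 < kappa /\ 0 < delta /\
    forall x, vnorm (vsub x xbar) < delta ->
      ege (f x) (fx + kappa / 2 * (vnorm (vsub x xbar))^2).

(* Main.v *)
Require Import Defs.
From Stdlib Require Import Reals Lra Lia Psatz Classical FunctionalExtensionality ClassicalEpsilon.
From Stdlib Require Vectors.Fin.
Open Scope R_scope.

Lemma fsum_ext n (g h : Fin.t n -> R) : (forall i, g i = h i) -> fsum n g = fsum n h.
Proof. induction n; simpl; intros H; [reflexivity|]. rewrite H, (IHn (fun i => g (Fin.FS i)) (fun i => h (Fin.FS i))); auto. Qed.

Lemma fsum_add n (g h : Fin.t n -> R) : fsum n (fun i => g i + h i) = fsum n g + fsum n h.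
Proof. induction n; simpl; [lra|]. rewrite (IHn (fun i => g (Fin.FS i)) (fun i => h (Fin.FS i))). lra. Qed.

Lemma fsum_scal n c (g : Fin.t n -> R) : fsum n (fun i => c * g i) = c * fsum n g.
Proof. induction n; simpl; [lra|]. rewrite (IHn (fun i => g (Fin.FS i))). lra. Qed.

Lemma fsum_le n (g h : Fin.t n -> R) : (forall i, g i <= h i) -> fsum n g <= fsum n h.
Proof. induction n; simpl; intros H; [lra|]. assert (forall i, g (Fin.FS i) <= h (Fin.FS i)) by auto. specialize (IHn (fun i => g (Fin.FS i)) (fun i => h (Fin.FS i)) H0). specialize (H Fin.F1). lra. Qed.

Lemma fsum_zero n : fsum n (fun _ => 0) = 0.
Proof. induction n; simpl; [lra|]. rewrite IHn; lra. Qed.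

Lemma fsum_nonneg n (g : Fin.t n -> R) : (forall i, 0 <= g i) -> 0 <= fsum n g.
Proof. intros H. rewrite <- (fsum_zero n). apply fsum_le; auto. Qed.

Lemma fsum_term n (g : Fin.t n -> R) j : (forall i, 0 <= g i) -> g j <= fsum n g.
Proof.
  revert g j. induction n; intros g j H.
  - apply (Fin.case0 (fun j => g j <= fsum 0 g) j).
  - simpl. apply (Fin.caseS' j (fun j => g j <= g Fin.F1 + fsum n (fun i => g (Fin.FS i)))).
    + assert (0 <= fsum n (fun i => g (Fin.FS i))) by (apply fsum_nonneg; auto). lra.
    + intros p. specialize (IHn (fun i => g (Fin.FS i)) p). simpl in IHn.
      assert (0 <= g Fin.F1) by auto. assert (g (Fin.FS p) <= fsum n (fun i => g (Fin.FS i))) by (apply IHn; auto). lra.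
Qed.

Lemma dot_ext n (x x' y y' : vec n) : (forall i, x i = x' i) -> (forall i, y i = y' i) -> dot x y = dot x' y'.
Proof. intros H1 H2. unfold dot. apply fsum_ext. intros i. rewrite H1, H2; auto. Qed.

Lemma dot_sym n (x y : vec n) : dot x y = dot y x.
Proof. unfold dot. apply fsum_ext. intros; ring. Qed.

Lemma dot_addl n (x y z : vec n) : dot (vadd x y) z = dot x z + dot y z.
Proof. unfold dot, vadd. rewrite <- fsum_add. apply fsum_ext; intros; ring. Qed.

Lemma dot_addr n (x y z : vec n) : dot z (vadd x y) = dot z x + dot z y.
Proof. unfold dot, vadd. rewrite <- fsum_add. apply fsum_ext; intros; ring. Qed.

Lemma dot_subl n (x y z : vec n) : dot (vsub x y) z = dot x z - dot y z.
Proof. unfold dot, vsub. replace (fsum n (fun i => x i * z i) - fsum n (fun i => y i * z i)) with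
  (fsum n (fun i => x i * z i) + (-1) * fsum n (fun i => y i * z i)) by ring.
  rewrite <- fsum_scal, <- fsum_add. apply fsum_ext; intros; ring. Qed.

Lemma dot_subr n (x y z : vec n) : dot z (vsub x y) = dot z x - dot z y.
Proof. rewrite dot_sym, dot_subl, (dot_sym _ x), (dot_sym _ y). auto. Qed.

Lemma dot_scall n a (x z : vec n) : dot (vscal a x) z = a * dot x z.
Proof. unfold dot, vscal. rewrite <- fsum_scal. apply fsum_ext; intros; ring. Qed.

Lemma dot_scalr n a (x z : vec n) : dot z (vscal a x) = a * dot z x.
Proof. unfold dot, vscal. rewrite <- fsum_scal. apply fsum_ext; intros; ring. Qed.

Lemma dot_zerol n (x : vec n) : dot vzero x = 0.
Proof. unfold dot, vzero. rewrite (fsum_scal n 0 x). ring. Qed.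

Lemma dot_zeror n (x : vec n) : dot x vzero = 0.
Proof. rewrite dot_sym. apply dot_zerol. Qed.

Lemma dot_pos n (x : vec n) : 0 <= dot x x.
Proof. unfold dot. apply fsum_nonneg. intros; nra. Qed.

Lemma coord_sq n (x : vec n) i : x i * x i <= dot x x.
Proof. unfold dot. apply (fsum_term n (fun i => x i * x i)). intros; nra. Qed.

Lemma vnorm_pos n (x : vec n) : 0 <= vnorm x.
Proof. apply sqrt_pos. Qed.

Lemma vnorm_sq n (x : vec n) : vnorm x * vnorm x = dot x x.
Proof. unfold vnorm. apply sqrt_sqrt, dot_pos. Qed.

Lemma vnorm_sq2 n (x : vec n) : (vnorm x)^2 = dot x x.
Proof. rewrite <- vnorm_sq. ring. Qed.

Lemma vnorm_ext n (x y : vec n) : (forall i, x i = y i) -> vnorm x = vnorm y.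
Proof. intros H. unfold vnorm. f_equal. apply dot_ext; auto. Qed.

Lemma coord_le n (x : vec n) i : Rabs (x i) <= vnorm x.
Proof. unfold vnorm. rewrite <- sqrt_Rsqr_abs. apply sqrt_le_1_alt. unfold Rsqr. apply coord_sq. Qed.

Lemma dot_expand n (x y : vec n) t : dot (vadd x (vscal t y)) (vadd x (vscal t y)) = dot x x + 2 * t * dot x y + t * t * dot y y.
Proof. rewrite !dot_addl, !dot_addr, !dot_scall, !dot_scalr, (dot_sym _ y x). ring. Qed.

Lemma cauchy_schwarz_sq n (x y : vec n) : dot x y * dot x y <= dot x x * dot y y.
Proof.
  destruct (Req_dec (dot y y) 0) as [H|H].
  - destruct (Req_dec (dot x y) 0) as [H'|H']. { rewrite H', H. lra. }
    pose proof (dot_pos _ (vadd x (vscal (- (dot x x + 1) / (2 * dot x y)) y))) as P.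
    rewrite dot_expand, H in P. exfalso.
    assert (2 * (- (dot x x + 1) / (2 * dot x y)) * dot x y = - (dot x x + 1)) by (field; auto).
    nra.
  - pose proof (dot_pos _ y).
    pose proof (dot_pos _ (vadd x (vscal (- dot x y / dot y y) y))) as P.
    rewrite dot_expand in P.
    assert (dot x x * dot y y - dot x y * dot x y = (dot x x + 2 * (- dot x y / dot y y) * dot x y + (- dot x y / dot y y) * (- dot x y / dot y y) * dot y y) * dot y y) by (field; auto).
    nra.
Qed.

Lemma cauchy_schwarz n (x y : vec n) : Rabs (dot x y) <= vnorm x * vnorm y.
Proof.
  unfold vnorm. rewrite <- sqrt_mult_alt by apply dot_pos. rewrite <- sqrt_Rsqr_abs.
  apply sqrt_le_1_alt. unfold Rsqr. apply cauchy_schwarz_sq.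
Qed.

Lemma vnorm_triangle n (x y : vec n) : vnorm (vadd x y) <= vnorm x + vnorm y.
Proof.
  assert (E: dot (vadd x y) (vadd x y) = dot x x + 2 * dot x y + dot y y).
  { rewrite !dot_addl, !dot_addr, (dot_sym _ y x). ring. }
  pose proof (cauchy_schwarz _ x y). pose proof (vnorm_pos _ x). pose proof (vnorm_pos _ y).
  pose proof (vnorm_sq _ x). pose proof (vnorm_sq _ y). pose proof (vnorm_sq _ (vadd x y)).
  pose proof (vnorm_pos _ (vadd x y)).
  pose proof (Rle_abs (dot x y)).
  apply Rsqr_incr_0_var; unfold Rsqr; nra.
Qed.

Lemma vnorm_scal n a (x : vec n) : vnorm (vscal a x) = Rabs a * vnorm x.
Proof.
  unfold vnorm. rewrite dot_scall, dot_scalr. rewrite <- Rmult_assoc. change (a*a) with (Rsqr a). rewrite sqrt_mult_alt.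
  - rewrite sqrt_Rsqr_abs. auto.
  - apply Rle_0_sqr.
Qed.
Lemma Un_cv_ext (u v : nat -> R) l l' : (forall k, u k = v k) -> l = l' -> Un_cv u l -> Un_cv v l'.
Proof. intros H <- C eps He. destruct (C eps He) as [N HN]. exists N. intros k Hk. rewrite <- H. auto. Qed.

Lemma Un_cv_const c : Un_cv (fun _ => c) c.
Proof. intros eps He. exists 0%nat. intros. unfold Rdist. rewrite Rminus_diag, Rabs_R0. lra. Qed.

Lemma Un_cv_squeeze (X Y : nat -> R) L : (forall k, Rabs (X k - L) <= Y k) -> Un_cv Y 0 -> Un_cv X L.
Proof. intros H C eps He. destruct (C eps He) as [N HN]. exists N. intros k Hk. specialize (HN k Hk).
  unfold Rdist in *. rewrite Rminus_0_r in HN. specialize (H k). pose proof (Rle_abs (Y k)). lra. Qed.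

Lemma Un_cv_abs0 (X : nat -> R) : Un_cv X 0 -> Un_cv (fun k => Rabs (X k)) 0.
Proof. intros C eps He. destruct (C eps He) as [N HN]. exists N. intros k Hk. specialize (HN k Hk).
  unfold Rdist in *. rewrite Rminus_0_r in *. rewrite Rabs_Rabsolu. auto. Qed.

Lemma incr_ge (phi : nat -> nat) : (forall k, (phi k < phi (S k))%nat) -> forall k, (k <= phi k)%nat.
Proof. intros H k. induction k; [lia|]. specialize (H k). lia. Qed.

Lemma incr_mono (phi : nat -> nat) : (forall k, (phi k < phi (S k))%nat) -> forall j k, (j <= k)%nat -> (phi j <= phi k)%nat.
Proof. intros H j k Hjk. induction Hjk; [lia|]. specialize (H m). lia. Qed.

Lemma Un_cv_subseq (u : nat -> R) l phi : (forall k, (phi k < phi (S k))%nat) -> Un_cv u l -> Un_cv (fun k => u (phi k)) l.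
Proof. intros H C eps He. destruct (C eps He) as [N HN]. exists N. intros k Hk. apply HN.
  pose proof (incr_ge phi H k). lia. Qed.

Lemma Un_cv_ge (X : nat -> R) L b : Un_cv X L -> (exists N, forall k, (N <= k)%nat -> b <= X k) -> b <= L.
Proof. intros C [N HN]. destruct (Rle_lt_dec b L) as [h|h]; auto. exfalso.
  destruct (C (b - L)) as [M HM]; [lra|]. specialize (HM (max N M) ltac:(lia)). specialize (HN (max N M) ltac:(lia)).
  unfold Rdist in HM. apply Rabs_def2 in HM. lra. Qed.

Lemma Un_cv_le (X : nat -> R) L b : Un_cv X L -> (exists N, forall k, (N <= k)%nat -> X k <= b) -> L <= b.
Proof. intros C [N HN]. destruct (Rle_lt_dec L b) as [h|h]; auto. exfalso.
  destruct (C (L - b)) as [M HM]; [lra|]. specialize (HM (max N M) ltac:(lia)). specialize (HN (max N M) ltac:(lia)).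
  unfold Rdist in HM. apply Rabs_def2 in HM. lra. Qed.

Lemma Un_cv_ev_lt (X : nat -> R) L b : Un_cv X L -> L < b -> exists N, forall k, (N <= k)%nat -> X k < b.
Proof. intros C h. destruct (C (b - L)) as [M HM]; [lra|]. exists M. intros k Hk. specialize (HM k Hk).
  unfold Rdist in HM. apply Rabs_def2 in HM. lra. Qed.

Lemma Un_cv_ev_gt (X : nat -> R) L b : Un_cv X L -> b < L -> exists N, forall k, (N <= k)%nat -> b < X k.
Proof. intros C h. destruct (C (L - b)) as [M HM]; [lra|]. exists M. intros k Hk. specialize (HM k Hk).
  unfold Rdist in HM. apply Rabs_def2 in HM. lra. Qed.

Lemma Un_cv_inv : Un_cv (fun k => / (INR k + 1)) 0.
Proof. intros eps He. destruct (archimed_cor1 eps He) as [N [HN1 HN2]]. exists N. intros k Hk.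
  unfold Rdist. rewrite Rminus_0_r. pose proof (pos_INR k). rewrite Rabs_pos_eq.
  2:{ left. apply Rinv_0_lt_compat. lra. }
  apply Rle_lt_trans with (/ INR N); auto. apply Rinv_le_contravar.
  - apply lt_0_INR. lia.
  - apply le_INR in Hk. lra. Qed.

Lemma fsum_cv n (g : nat -> Fin.t n -> R) (G : Fin.t n -> R) :
  (forall i, Un_cv (fun k => g k i) (G i)) -> Un_cv (fun k => fsum n (g k)) (fsum n G).
Proof.
  revert g G. induction n; intros g G H; simpl.
  - apply Un_cv_const.
  - apply CV_plus. apply H. apply (IHn (fun k i => g k (Fin.FS i)) (fun i => G (Fin.FS i))). intros; apply H.
Qed.

Lemma vnorm_le_sumabs n (x : vec n) : vnorm x <= fsum n (fun i => Rabs (x i)).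
Proof.
  revert x. induction n; intros x.
  - unfold vnorm, dot. simpl. rewrite sqrt_0. lra.
  - unfold vnorm, dot. simpl. specialize (IHn (fun i => x (Fin.FS i))). unfold vnorm, dot in IHn.
    set (b := fsum n (fun i => x (Fin.FS i) * x (Fin.FS i))) in *.
    set (s := fsum n (fun i => Rabs (x (Fin.FS i)))) in *.
    assert (0 <= b) by (apply fsum_nonneg; intros; nra).
    pose proof (sqrt_pos b). pose proof (sqrt_sqrt b H). pose proof (Rabs_pos (x Fin.F1)).
    apply Rle_trans with (Rabs (x Fin.F1) + sqrt b); [|lra].
    apply Rsqr_incr_0_var; [|lra]. rewrite Rsqr_sqrt by nra. unfold Rsqr.
    assert (Rabs (x Fin.F1) * Rabs (x Fin.F1) = x Fin.F1 * x Fin.F1) by (rewrite <- Rabs_mult; apply Rabs_pos_eq; nra).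
    nra.
Qed.

Lemma vcv_coord n (u : nat -> vec n) l : vcv u l -> forall i, Un_cv (fun k => u k i) (l i).
Proof. intros C i eps He. destruct (C eps He) as [N HN]. exists N. intros k Hk. specialize (HN k Hk).
  unfold Rdist. pose proof (coord_le _ (vsub (u k) l) i). unfold vsub at 1 in H. lra. Qed.

Lemma coord_vcv n (u : nat -> vec n) l : (forall i, Un_cv (fun k => u k i) (l i)) -> vcv u l.
Proof. intros H eps He.
  assert (C: Un_cv (fun k => fsum n (fun i => Rabs (u k i - l i))) (fsum n (fun i => 0))).
  { apply fsum_cv. intros i. apply Un_cv_abs0. specialize (H i).
    pose proof (CV_minus _ (fun _ => l i) _ _ H (Un_cv_const (l i))) as C. rewrite Rminus_diag in C. exact C. }
  rewrite fsum_zero in C. destruct (C eps He) as [N HN]. exists N. intros k Hk. specialize (HN k Hk).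
  unfold Rdist in HN. rewrite Rminus_0_r in HN.
  pose proof (vnorm_le_sumabs _ (vsub (u k) l)). unfold vsub at 2 in H0.
  pose proof (Rle_abs (fsum n (fun i => Rabs (u k i - l i)))). lra.
Qed.

Lemma vcv_ext n (u v : nat -> vec n) l l' : (forall k i, u k i = v k i) -> (forall i, l i = l' i) -> vcv u l -> vcv v l'.
Proof. intros H1 H2 C. apply coord_vcv. intros i. apply (Un_cv_ext (fun k => u k i) _ (l i)); auto.
  apply vcv_coord; auto. Qed.

Lemma dot_cv n (a b : nat -> vec n) A B : vcv a A -> vcv b B -> Un_cv (fun k => dot (a k) (b k)) (dot A B).
Proof. intros Ha Hb. unfold dot. apply (fsum_cv n (fun k i => a k i * b k i)). intros i.
  apply CV_mult; apply vcv_coord; auto. Qed.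

Lemma vcv_const n (c : vec n) : vcv (fun _ => c) c.
Proof. apply coord_vcv. intros; apply Un_cv_const. Qed.

Lemma vcv_subseq n (u : nat -> vec n) l phi : (forall k, (phi k < phi (S k))%nat) -> vcv u l -> vcv (fun k => u (phi k)) l.
Proof. intros H C. apply coord_vcv. intros i. apply (Un_cv_subseq (fun k => u k i)); auto. apply vcv_coord; auto. Qed.

Lemma vnorm_cv n (a : nat -> vec n) A : vcv a A -> Un_cv (fun k => vnorm (a k)) (vnorm A).
Proof. intros C. pose proof (dot_cv _ _ _ _ _ C C) as D.
  apply (Un_cv_ext (fun k => sqrt (dot (a k) (a k))) _ (sqrt (dot A A))); auto.
  intros eps He.
  destruct (Rlt_dec 0 (dot A A)) as [hp|hp].
  -
    assert (hs: 0 < sqrt (dot A A)) by (apply sqrt_lt_R0; auto).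
    destruct (D (eps * sqrt (dot A A))) as [N HN]; [apply Rmult_lt_0_compat; lra|].
    exists N. intros k Hk. specialize (HN k Hk). unfold Rdist in *.
    pose proof (dot_pos _ (a k)). pose proof (sqrt_pos (dot (a k) (a k))).
    pose proof (sqrt_sqrt _ H). pose proof (sqrt_sqrt _ (dot_pos _ A)).
    set (p := sqrt (dot (a k) (a k))) in *. set (q := sqrt (dot A A)) in *.
    assert (dot (a k) (a k) - dot A A = (p - q) * (p + q)) by (rewrite <- H1, <- H2; ring).
    rewrite H3, Rabs_mult in HN. rewrite (Rabs_pos_eq (p+q)) in HN by lra.
    apply Rmult_lt_reg_r with q; auto. apply Rle_lt_trans with (Rabs (p - q) * (p + q)); [|lra].
    apply Rmult_le_compat_l; [apply Rabs_pos|lra].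
  - assert (dot A A = 0) by (pose proof (dot_pos _ A); lra). rewrite H, sqrt_0.
    destruct (D (eps * eps)) as [N HN]; [nra|]. exists N. intros k Hk. specialize (HN k Hk). unfold Rdist in *.
    rewrite H, Rminus_0_r in *. rewrite Rabs_pos_eq in * by (try apply sqrt_pos; apply dot_pos).
    pose proof (sqrt_sqrt _ (dot_pos _ (a k))). pose proof (sqrt_pos (dot (a k) (a k))). nra.
Qed.
Definition incr (phi : nat -> nat) := forall k, (phi k < phi (S k))%nat.

Lemma incr_strict phi : incr phi -> forall j k, (j < k)%nat -> (phi j < phi k)%nat.
Proof. intros H j k Hjk. induction Hjk. apply H. specialize (H m). lia. Qed.

Lemma incr_comp phi psi : incr phi -> incr psi -> incr (fun k => phi (psi k)).
Proof. intros H1 H2 k. apply incr_strict; auto. Qed.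

Lemma BW1 (u : nat -> R) M : (forall k, Rabs (u k) <= M) ->
  exists phi l, incr phi /\ Un_cv (fun k => u (phi k)) l.
Proof.
  intros HM.
  destruct (Bolzano_Weierstrass u (fun c => -M <= c <= M) (compact_P3 (-M) M)) as [l Hl].
  { intros k. specialize (HM k). pose proof (Rle_abs (u k)). pose proof (Rle_abs (- u k)). rewrite Rabs_Ropp in *. lra. }
  assert (H: forall N k, exists p, (N <= p)%nat /\ Rabs (u p - l) < / (INR k + 1)).
  { intros N k. assert (hp: 0 < / (INR k + 1)) by (apply Rinv_0_lt_compat; pose proof (pos_INR k); lra).
    destruct (Hl (disc l (mkposreal _ hp)) N) as [p [Hp1 Hp2]].
    - exists (mkposreal _ hp). intros y Hy. exact Hy.
    - exists p. split; auto. }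
  set (g := fun N k => proj1_sig (constructive_indefinite_description _ (H N k))).
  assert (Hg: forall N k, (N <= g N k)%nat /\ Rabs (u (g N k) - l) < / (INR k + 1)).
  { intros N k. unfold g. destruct (constructive_indefinite_description _ (H N k)); auto. }
  set (phi := nat_rect (fun _ => nat) (g 0%nat 0%nat) (fun k p => g (S p) (S k))).
  exists phi, l. split.
  - intros k. change (phi (S k)) with (g (S (phi k)) (S k)). destruct (Hg (S (phi k)) (S k)). lia.
  - apply (Un_cv_squeeze _ (fun k => / (INR k + 1))); [|apply Un_cv_inv].
    intros k. destruct k.
    + change (phi 0%nat) with (g 0%nat 0%nat). left. apply Hg.
    + change (phi (S k)) with (g (S (phi k)) (S k)). left. apply Hg.
Qed.

Lemma vnorm_tail n (x : vec (S n)) : vnorm (fun i => x (Fin.FS i)) <= vnorm x.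
Proof. unfold vnorm. apply sqrt_le_1_alt. unfold dot. simpl. pose proof (Rle_0_sqr (x Fin.F1)). unfold Rsqr in H. lra. Qed.

Lemma BWn n (a : nat -> vec n) M : (forall k, vnorm (a k) <= M) ->
  exists phi l, incr phi /\ vcv (fun k => a (phi k)) l.
Proof.
  revert a. induction n; intros a HM.
  - exists (fun k => k), vzero. split. intros k; lia. apply coord_vcv. intros i. apply (Fin.case0 (fun i => _) i).
  - destruct (BW1 (fun k => a k Fin.F1) M) as [phi1 [l0 [Hp1 Hc1]]].
    { intros k. eapply Rle_trans; [apply coord_le|apply HM]. }
    destruct (IHn (fun k i => a (phi1 k) (Fin.FS i))) as [phi2 [l' [Hp2 Hc2]]].
    { intros k. eapply Rle_trans; [apply vnorm_tail|apply HM]. }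
    exists (fun k => phi1 (phi2 k)), (fun i => Fin.caseS' i (fun _ => R) l0 l'). split.
    + apply incr_comp; auto.
    + apply coord_vcv. intros i.
      apply (Fin.caseS' i (fun i => Un_cv (fun k => a (phi1 (phi2 k)) i) (Fin.caseS' i (fun _ => R) l0 l'))).
      * simpl. apply (Un_cv_subseq (fun k => a (phi1 k) Fin.F1)); auto.
      * intros p. simpl. apply (vcv_coord _ _ _ Hc2 p).
Qed.

Lemma dec_extract (tau : nat -> R) : (forall k, 0 < tau k) -> Un_cv tau 0 ->
  exists phi, incr phi /\ forall k, tau (phi (S k)) <= tau (phi k).
Proof.
  intros Hp C.
  assert (H: forall N p, exists q, (N <= q)%nat /\ tau q <= tau p).
  { intros N p. destruct (C (tau p) (Hp p)) as [M HM]. exists (max N M). split; [lia|].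
    specialize (HM (max N M) ltac:(lia)). unfold Rdist in HM. rewrite Rminus_0_r in HM.
    pose proof (Rle_abs (tau (max N M))). lra. }
  set (g := fun N p => proj1_sig (constructive_indefinite_description _ (H N p))).
  assert (Hg: forall N p, (N <= g N p)%nat /\ tau (g N p) <= tau p).
  { intros N p. unfold g. destruct (constructive_indefinite_description _ (H N p)); auto. }
  set (phi := nat_rect (fun _ => nat) 0%nat (fun k p => g (S p) p)).
  exists phi. split.
  - intros k. change (phi (S k)) with (g (S (phi k)) (phi k)). destruct (Hg (S (phi k)) (phi k)). lia.
  - intros k. change (phi (S k)) with (g (S (phi k)) (phi k)). apply Hg.
Qed.

Lemma noninc_mono (s : nat -> R) : (forall k, s (S k) <= s k) -> forall j k, (j <= k)%nat -> s k <= s j.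
Proof. intros H j k Hjk. induction Hjk; [lra|]. specialize (H m). lra. Qed.

Lemma triple_extract n (tau : nat -> R) (w z : nat -> vec n) M1 M2 :
  (forall k, 0 < tau k) -> Un_cv tau 0 -> (forall k, vnorm (w k) <= M1) -> (forall k, vnorm (z k) <= M2) ->
  exists phi w0 z0, incr phi /\ pos_dec_to0 (fun k => tau (phi k)) /\
    vcv (fun k => w (phi k)) w0 /\ vcv (fun k => z (phi k)) z0.
Proof.
  intros Hp C Hw Hz.
  destruct (dec_extract tau Hp C) as [phi1 [Hi1 Hd1]].
  destruct (BWn n (fun k => w (phi1 k)) M1) as [phi2 [w0 [Hi2 Hc2]]]; [intros; apply Hw|].
  destruct (BWn n (fun k => z (phi1 (phi2 k))) M2) as [phi3 [z0 [Hi3 Hc3]]]; [intros; apply Hz|].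
  exists (fun k => phi1 (phi2 (phi3 k))), w0, z0. split; [|split; [|split]].
  - apply incr_comp; auto. apply incr_comp; auto.
  - split; [|split].
    + intros; auto.
    + intros k. apply (noninc_mono (fun k => tau (phi1 k)) Hd1). apply (incr_mono (fun k => phi2 (phi3 k))); [apply incr_comp; auto | lia].
    + apply (Un_cv_subseq tau 0 (fun k => phi1 (phi2 (phi3 k)))); auto. apply incr_comp; auto. apply incr_comp; auto.
  - apply (vcv_subseq _ (fun k => w (phi1 (phi2 k))) w0 phi3); auto.
  - auto.
Qed.
Definition ev (a : ereal) : R := match a with EFin r => r | EInf => 0 end.

Lemma vec_eq n (x y : vec n) : (forall i, x i = y i) -> x = y.
Proof. intros H. apply functional_extensionality. auto. Qed.

Lemma vnorm_zero n : vnorm (@vzero n) = 0.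
Proof. unfold vnorm. rewrite dot_zerol. apply sqrt_0. Qed.

Lemma vnorm0_eq n (x y : vec n) : vnorm (vsub x y) = 0 -> x = y.
Proof. intros H. apply vec_eq. intros i. pose proof (coord_le _ (vsub x y) i). rewrite H in H0.
  unfold vsub in H0. pose proof (Rabs_pos (x i - y i)). assert (Rabs (x i - y i) = 0) by lra.
  destruct (Req_dec (x i - y i) 0); [lra|]. apply Rabs_no_R0 in H3. contradiction. Qed.

Lemma vsub_self n (x : vec n) : vnorm (vsub x x) = 0.
Proof. rewrite <- (vnorm_zero n). apply vnorm_ext. intros; unfold vsub, vzero; ring. Qed.

Lemma ege_mono a r r' : ege a r -> r' <= r -> ege a r'.
Proof. destruct a; simpl; auto; lra. Qed.

Lemma egt_mono a r r' : egt a r -> r' <= r -> egt a r'.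
Proof. destruct a; simpl; auto; lra. Qed.

Lemma prox_to_reg n (f : vec n -> ereal) x v : prox_subdiff f x v -> reg_subdiff f x v.
Proof.
  intros [fx [E [M [delta [Hd H]]]]]. exists fx. split; auto. intros eps He.
  exists (Rmin delta (eps / (Rabs M + 1))). split.
  { apply Rmin_pos; auto. apply Rdiv_lt_0_compat; auto. pose proof (Rabs_pos M); lra. }
  intros y Hy. destruct (Req_dec (vnorm (vsub y x)) 0) as [H0|H0].
  - pose proof (vnorm0_eq _ _ _ H0). subst y. rewrite E. simpl.
    rewrite H0. rewrite (dot_ext _ v v (vsub x x) vzero) by (auto; intros; unfold vsub, vzero; ring).
    rewrite dot_zeror. lra.
  - pose proof (vnorm_pos _ (vsub y x)).
    assert (h1: vnorm (vsub y x) < delta) by (pose proof (Rmin_l delta (eps / (Rabs M + 1))); lra).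
    assert (h2: vnorm (vsub y x) < eps / (Rabs M + 1)) by (pose proof (Rmin_r delta (eps / (Rabs M + 1))); lra).
    eapply ege_mono. apply H. split; lra.
    set (N := vnorm (vsub y x)) in *.
    assert (Rabs M * N < eps).
    { pose proof (Rabs_pos M). apply Rmult_lt_compat_r with (r := Rabs M + 1) in h2; [|lra].
      unfold Rdiv in h2. rewrite Rmult_assoc, Rinv_l in h2 by lra. nra. }
    assert (M * N <= Rabs M * N) by (apply Rmult_le_compat_r; [lra|apply Rle_abs]).
    nra.
Qed.

Lemma prox_to_lim n (f : vec n -> ereal) x v : prox_subdiff f x v -> lim_subdiff f x v.
Proof.
  intros H. pose proof (prox_to_reg _ _ _ _ H) as R. destruct H as [fx [E _]].
  exists fx. split; auto. exists (fun _ => x), (fun _ => v). split; [apply vcv_const|]. split; [apply vcv_const|].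
  split; auto. intros eps He. exists 0%nat. intros k _. exists fx. split; auto. rewrite Rminus_diag, Rabs_R0; auto.
Qed.

Lemma d2_exists n (f : vec n -> ereal) xbar v fx w : exists a, is_d2 f xbar v fx w a.
Proof.
  set (q := q2 f xbar v fx).
  set (S := fun b => exists delta, 0 < delta /\ forall tau w', 0 < tau < delta -> vnorm (vsub w' w) < delta -> egt (q tau w') b).
  assert (down: forall b b', S b -> b' <= b -> S b').
  { intros b b' [d [Hd H]] hb. exists d. split; auto. intros. eapply egt_mono; eauto. }
  assert (notS: forall b' b, ~ S b' -> b' < b -> forall delta, 0 < delta -> exists tau w', 0 < tau < delta /\ vnorm (vsub w' w) < delta /\ elt (q tau w') b).
  { intros b' b nS hb delta Hd. apply NNPP. intros C. apply nS. exists delta. split; auto. intros tau w' H1 H2.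
    destruct (q tau w') eqn:Eq; simpl; auto. destruct (Rlt_dec b' r); auto. exfalso. apply C. exists tau, w'.
    rewrite Eq. simpl. split; auto. split; auto. lra. }
  destruct (classic (exists b, S b)) as [[b0 Hb0]|Hne].
  - destruct (classic (bound S)) as [Hb|Hnb].
    + destruct (completeness S Hb (ex_intro _ b0 Hb0)) as [m [Hub Hlub]].
      exists (XFin m). split.
      * simpl. intros b hb. apply NNPP. intros nb. assert (is_upper_bound S b).
        { intros s Hs. destruct (Rle_dec s b); auto. exfalso. apply nb. apply (down s); auto. lra. }
        specialize (Hlub b H). lra.
      * simpl. intros b hb. apply (notS ((m + b) / 2)); [|lra]. intros Hs. specialize (Hub _ Hs). lra.
    + exists XPInf. split.
      * simpl. intros b _. apply NNPP. intros nb. apply Hnb. exists b. intros s Hs.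
        destruct (Rle_dec s b); auto. exfalso. apply nb. apply (down s); auto. lra.
      * simpl. intros b [].
  - exists XMInf. split.
    + simpl. intros b [].
    + simpl. intros b _. apply (notS (b - 1)); [|lra]. intros Hs. apply Hne. eauto.
Qed.

Lemma algebra_final d p r W : 0 <= r -> 0 <= W ->
  (forall s, 0 < s -> d <= s * s * d - 2 * (s - 1) * p + r * ((s - 1) * (s - 1)) * W) -> p = d.
Proof.
  intros Hr HW H. set (K := Rabs (d + r * W) + 1).
  assert (HK: 0 < K) by (unfold K; pose proof (Rabs_pos (d + r * W)); lra).
  assert (HK2: d + r * W <= K /\ - K <= d + r * W).
  { unfold K. pose proof (Rle_abs (d + r*W)). pose proof (Rle_abs (- (d + r*W))). rewrite Rabs_Ropp in H1. lra. }
  destruct (Rtotal_order p d) as [h|[h|h]]; auto; exfalso.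
  - set (e := Rmin (1/2) ((d - p) / (2 * K))).
    assert (he: 0 < e) by (apply Rmin_pos; [lra| apply Rdiv_lt_0_compat; lra]).
    assert (he1: e <= 1/2) by apply Rmin_l.
    assert (he2: e * (2 * K) <= d - p).
    { pose proof (Rmin_r (1/2) ((d - p) / (2 * K))). fold e in H0.
      apply Rmult_le_compat_r with (r := 2 * K) in H0; [|lra]. unfold Rdiv in H0.
      rewrite Rmult_assoc, Rinv_l in H0 by lra. lra. }
    specialize (H (1 - e) ltac:(lra)).
    assert (e * (2 * (p - d) + e * (d + r * W)) >= 0) by nra.
    assert (2 * (p - d) + e * (d + r * W) >= 0).
    { destruct (Rle_lt_dec 0 (2 * (p - d) + e * (d + r * W))); [lra|]. nra. }
    nra.
  - set (e := (p - d) / (2 * K)).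
    assert (he: 0 < e) by (apply Rdiv_lt_0_compat; lra).
    assert (he2: e * (2 * K) = p - d) by (unfold e; field; lra).
    specialize (H (1 + e) ltac:(lra)).
    assert (e * (2 * (d - p) + e * (d + r * W)) >= 0) by nra.
    assert (2 * (d - p) + e * (d + r * W) >= 0).
    { destruct (Rle_lt_dec 0 (2 * (d - p) + e * (d + r * W))); [lra|]. nra. }
    nra.
Qed.
Definition PRineq n (f : vec n -> ereal) xbar fx r eps := forall x u v fu,
      vnorm (vsub x xbar) <= eps -> vnorm (vsub u xbar) <= eps ->
      f u = EFin fu -> Rabs (fu - fx) < eps ->
      lim_subdiff f u v -> vnorm (vsub v vzero) <= eps ->
      ege (f x) (fu + dot v (vsub x u) - r / 2 * (vnorm (vsub x u))^2).

Lemma PR0 n (f : vec n -> ereal) xbar fx r eps : f xbar = EFin fx -> PRineq n f xbar fx r eps ->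
  lim_subdiff f xbar vzero -> 0 < eps -> forall x, vnorm (vsub x xbar) <= eps ->
  ege (f x) (fx - r / 2 * (vnorm (vsub x xbar))^2).
Proof.
  intros E PR L He x Hx. eapply ege_mono. apply (PR x xbar vzero fx); auto.
  - rewrite vsub_self; lra.
  - rewrite Rminus_diag, Rabs_R0; auto.
  - rewrite vsub_self; lra.
  - rewrite dot_zerol. lra.
Qed.

Lemma vcv_affine n (xbar : vec n) (t : nat -> R) (wk : nat -> vec n) w :
  Un_cv t 0 -> vcv wk w -> vcv (fun k => vadd xbar (vscal (t k) (wk k))) xbar.
Proof. intros Ht Hw. apply coord_vcv. intros i. unfold vadd, vscal.
  apply (Un_cv_ext (fun k => xbar i + t k * wk k i) _ (xbar i + 0 * w i)); auto; [ring|].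
  apply CV_plus. apply Un_cv_const. apply CV_mult; auto. apply vcv_coord; auto. Qed.

Lemma pos_dec_scale t s : pos_dec_to0 t -> 0 < s -> pos_dec_to0 (fun k => s * t k).
Proof. intros [H1 [H2 H3]] hs. split; [|split].
  - intros k. specialize (H1 k). nra.
  - intros k. specialize (H2 k). nra.
  - apply (Un_cv_ext (fun k => s * t k) _ (s * 0)); auto; [ring|]. apply CV_mult; auto. apply Un_cv_const. Qed.

Lemma q2_zero n (f : vec n -> ereal) xbar fx tau w' :
  q2 f xbar vzero fx tau w' = match f (vadd xbar (vscal tau w')) with
                               | EFin y => EFin ((y - fx) / (tau ^ 2 / 2)) | EInf => EInf end.
Proof. unfold q2. rewrite dot_zerol. destruct (f _); auto. f_equal. f_equal. ring. Qed.

Lemma ev_max (P Q : nat -> Prop) : (exists N, forall k, (N <= k)%nat -> P k) -> (exists N, forall k, (N <= k)%nat -> Q k) ->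
  exists N, forall k, (N <= k)%nat -> P k /\ Q k.
Proof. intros [N1 H1] [N2 H2]. exists (max N1 N2). intros k Hk. split; [apply H1|apply H2]; lia. Qed.

Lemma vcv_ev_lt n (u : nat -> vec n) l e : vcv u l -> 0 < e -> exists N, forall k, (N <= k)%nat -> vnorm (vsub (u k) l) < e.
Proof. intros C He. apply C; auto. Qed.

Lemma Un_cv_ev_lt0 t e : Un_cv t 0 -> 0 < e -> (forall k, 0 < t k) -> exists N, forall k, (N <= k)%nat -> t k < e.
Proof. intros C He Hp. destruct (C e He) as [N HN]. exists N. intros k Hk. specialize (HN k Hk). unfold Rdist in HN.
  rewrite Rminus_0_r, Rabs_pos_eq in HN; auto. left; auto. Qed.

Lemma graph_setup n (f : vec n -> ereal) xbar fx r eps (t : nat -> R) (wk zk : nat -> vec n) w z :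
  f xbar = EFin fx -> 0 < eps -> PRineq n f xbar fx r eps -> subdiff_continuous f xbar vzero ->
  pos_dec_to0 t -> vcv wk w -> vcv zk z ->
  (forall k, prox_subdiff f (vadd xbar (vscal (t k) (wk k))) (vadd vzero (vscal (t k) (zk k)))) ->
  exists N0, forall k, (N0 <= k)%nat ->
    f (vadd xbar (vscal (t k) (wk k))) = EFin (ev (f (vadd xbar (vscal (t k) (wk k))))) /\
    forall y, vnorm (vscal (t k) y) <= eps ->
      ege (f (vadd xbar (vscal (t k) y)))
        (ev (f (vadd xbar (vscal (t k) (wk k)))) + (t k)^2 * (dot (zk k) (vsub y (wk k)) - r / 2 * dot (vsub y (wk k)) (vsub y (wk k)))).
Proof.
  intros E He PR [fx' [E' SC]] [Htp [Htd Htc]] Hw Hz Hp.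
  rewrite E in E'. injection E' as <-.
  set (u := fun k => vadd xbar (vscal (t k) (wk k))).
  set (v := fun k => vadd vzero (vscal (t k) (zk k))).
  assert (Hl: forall k, lim_subdiff f (u k) (v k)) by (intros; apply prox_to_lim; apply Hp).
  assert (Hu: vcv u xbar) by (apply vcv_affine with w; auto).
  assert (Hv: vcv v vzero) by (apply vcv_affine with z; auto).
  specialize (SC u v Hu Hv Hl).
  destruct (SC eps He) as [N1 H1].
  destruct (Hu eps He) as [N2 H2]. destruct (Hv eps He) as [N3 H3].
  exists (max N1 (max N2 N3)). intros k Hk.
  destruct (H1 k ltac:(lia)) as [Fk [EF HF]].
  specialize (H2 k ltac:(lia)). specialize (H3 k ltac:(lia)).
  fold (u k). rewrite EF. simpl. split; auto.
  intros y Hy. eapply ege_mono. apply (PR _ (u k) (v k) Fk); auto; try lra.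
  { rewrite (vnorm_ext _ _ (vscal (t k) y)); auto. intros i; unfold vsub, vadd, vscal; ring. }
  rewrite vnorm_sq2.
  assert (D: forall i, vsub (vadd xbar (vscal (t k) y)) (u k) i = vscal (t k) (vsub y (wk k)) i).
  { intros i. unfold u, vsub, vadd, vscal. ring. }
  assert (D2: forall i, v k i = vscal (t k) (zk k) i).
  { intros; unfold v, vadd, vzero, vscal; ring. }
  rewrite (dot_ext _ _ _ _ _ D D). rewrite (dot_ext _ _ _ _ _ D2 D).
  rewrite !dot_scall, !dot_scalr. right. ring.
Qed.
Lemma vnorm_sq_scal n (t : R) (y : vec n) : (vnorm (vscal t y))^2 = t^2 * dot y y.
Proof. rewrite vnorm_sq2, dot_scall, dot_scalr. ring. Qed.

Lemma keyE n (f : vec n -> ereal) xbar fx r eps w z a :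
  f xbar = EFin fx -> 0 < r -> 0 < eps -> PRineq n f xbar fx r eps ->
  subdiff_continuous f xbar vzero -> twice_epi_diff f xbar vzero -> lim_subdiff f xbar vzero ->
  is_d2 f xbar vzero fx w a -> graph_deriv_prox f xbar vzero w z ->
  exists d, a = XFin d /\ dot z w = d.
Proof.
  intros E Hr He PR SC TED L0 D2 [t [wk [zk [Ht [Hw [Hz Hp]]]]]].
  destruct (graph_setup n f xbar fx r eps t wk zk w z E He PR SC Ht Hw Hz Hp) as [N0 HN0].
  pose proof Ht as [Htp [Htd Htc]].
  destruct TED as [fx' [E' TED]]. rewrite E in E'; injection E' as <-.
  set (P := fun k => (ev (f (vadd xbar (vscal (t k) (wk k)))) - fx) / (t k ^ 2 / 2)).
  assert (HqP: forall k, (N0 <= k)%nat -> q2 f xbar vzero fx (t k) (wk k) = EFin (P k)).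
  { intros k Hk. rewrite q2_zero. destruct (HN0 k Hk) as [Ef _]. rewrite Ef. reflexivity. }
  assert (HT: forall k, 0 < t k ^ 2 / 2) by (intros k; specialize (Htp k); nra).
  assert (HPT: forall k, P k * (t k ^ 2 / 2) = ev (f (vadd xbar (vscal (t k) (wk k)))) - fx).
  { intros k. unfold P. field. specialize (Htp k). lra. }
  destruct a as [d| |].
  -
    exists d. split; auto. apply (algebra_final d (dot z w) r (dot w w)); [lra|apply dot_pos|].
    intros s hs.
    destruct (TED w (XFin d) D2 (fun k => s * t k) (pos_dec_scale t s Ht hs)) as [w' [Hw' Hrec]].
    simpl in Hrec.
    set (Q := fun k => ev (q2 f xbar vzero fx (s * t k) (w' k))).
    assert (HQc: Un_cv Q d).
    { intros e' he'. destruct (Hrec e' he') as [N HN]. exists N. intros k Hk. destruct (HN k Hk) as [rr [Er Hr']].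
      unfold Q, Rdist. rewrite Er. simpl. auto. }
    set (Ck := fun k => dot (zk k) (vsub (vscal s (w' k)) (wk k)) - r / 2 * dot (vsub (vscal s (w' k)) (wk k)) (vsub (vscal s (w' k)) (wk k))).
    set (C := dot z (vsub (vscal s w) w) - r / 2 * dot (vsub (vscal s w) w) (vsub (vscal s w) w)).
    assert (Hdv: vcv (fun k => vsub (vscal s (w' k)) (wk k)) (vsub (vscal s w) w)).
    { apply coord_vcv. intros i. unfold vsub, vscal. apply CV_minus.
      - apply CV_mult. apply Un_cv_const. apply vcv_coord; auto.
      - apply vcv_coord; auto. }
    assert (HCc: Un_cv Ck C).
    { apply CV_minus. apply dot_cv; auto. apply CV_mult. apply Un_cv_const. apply dot_cv; auto. }
    assert (HXc: Un_cv (fun k => s * s * Q k - 2 * Ck k) (s * s * d - 2 * C)).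
    { apply CV_minus; apply CV_mult; auto; apply Un_cv_const. }
    assert (Hb: forall b, b < d -> b <= s * s * d - 2 * C).
    { intros b hb. apply (Un_cv_ge _ _ _ HXc).
      destruct (proj1 D2 b hb) as [dl [Hdl Hdl2]].
      destruct (Hrec 1 ltac:(lra)) as [N1 HN1].
      assert (Haff: vcv (fun k => vadd vzero (vscal (t k) (vscal s (w' k)))) vzero).
      { apply (vcv_affine n vzero t (fun k => vscal s (w' k)) (vscal s w) Htc).
        apply coord_vcv. intros i. unfold vscal. apply CV_mult. apply Un_cv_const. apply vcv_coord; auto. }
      destruct (Haff eps He) as [N2 HN2].
      destruct (Un_cv_ev_lt0 t dl Htc Hdl Htp) as [N3 HN3].
      destruct (Hw dl Hdl) as [N4 HN4].
      exists (max (max N0 N1) (max (max N2 N3) N4)). intros k Hk.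
      destruct (HN0 k ltac:(lia)) as [Ef Hc].
      destruct (HN1 k ltac:(lia)) as [qq [Eq _]].
      specialize (HN2 k ltac:(lia)). specialize (HN3 k ltac:(lia)). specialize (HN4 k ltac:(lia)).
      specialize (Hdl2 (t k) (wk k) ltac:(split; [apply Htp|lra]) HN4).
      rewrite (HqP k ltac:(lia)) in Hdl2. simpl in Hdl2.
      assert (Hy: vnorm (vscal (t k) (vscal s (w' k))) <= eps).
      { left. rewrite (vnorm_ext _ _ (vsub (vadd vzero (vscal (t k) (vscal s (w' k)))) vzero)); auto.
        intros i; unfold vsub, vadd, vscal, vzero; ring. }
      specialize (Hc _ Hy). fold (Ck k) in Hc.
      assert (Ept: vadd xbar (vscal (t k) (vscal s (w' k))) = vadd xbar (vscal (s * t k) (w' k))).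
      { apply vec_eq. intros i. unfold vadd, vscal. ring. }
      rewrite Ept in Hc. rewrite q2_zero in Eq.
      unfold Q. rewrite q2_zero.
      destruct (f (vadd xbar (vscal (s * t k) (w' k)))) as [G|] eqn:EG; [|discriminate].
      cbn [ege ev] in Hc |- *. injection Eq as Eq.
      set (T := t k ^ 2 / 2) in *.
      assert (HGQ: s * s * ((G - fx) / ((s * t k) ^ 2 / 2)) * T = G - fx).
      { unfold T. field. specialize (Htp k). split; lra. }
      specialize (HPT k). specialize (HT k). fold T in HPT, HT.
      set (F := ev (f (vadd xbar (vscal (t k) (wk k))))) in *.
      assert (P k <= s * s * ((G - fx) / ((s * t k) ^ 2 / 2)) - 2 * Ck k).
      { apply (Rmult_le_reg_r T); auto. rewrite Rmult_minus_distr_r, HGQ, HPT.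
        assert (t k ^ 2 = 2 * T) by (unfold T; field). nra. }
      lra. }
    assert (HL: d <= s * s * d - 2 * C).
    { destruct (Rle_lt_dec d (s * s * d - 2 * C)); auto. specialize (Hb ((s * s * d - 2 * C + d) / 2) ltac:(lra)). lra. }
    assert (HC: C = (s - 1) * dot z w - r / 2 * ((s - 1) * (s - 1)) * dot w w).
    { unfold C. assert (HH: forall i, vsub (vscal s w) w i = vscal (s - 1) w i) by (intros; unfold vsub, vscal; ring).
      rewrite (dot_ext _ _ _ _ _ HH HH), (dot_ext _ z z _ _ (fun i => eq_refl) HH).
      rewrite !dot_scall, !dot_scalr. ring. }
    rewrite HC in HL. lra.
  -
    exfalso.
    set (Bk := fun k => dot (zk k) (vsub vzero (wk k)) - r / 2 * dot (vsub vzero (wk k)) (vsub vzero (wk k))).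
    set (B := dot z (vsub vzero w) - r / 2 * dot (vsub vzero w) (vsub vzero w)).
    assert (Hup: forall k, (N0 <= k)%nat -> P k <= -2 * Bk k).
    { intros k Hk. destruct (HN0 k Hk) as [Ef Hc]. specialize (Hc vzero).
      assert (EE: vadd xbar (vscal (t k) (@vzero n)) = xbar) by (apply vec_eq; intros; unfold vadd, vscal, vzero; ring).
      rewrite EE, E in Hc. cbn [ege] in Hc.
      assert (vnorm (vscal (t k) (@vzero n)) <= eps).
      { rewrite (vnorm_ext n _ vzero), vnorm_zero; [lra| intros; unfold vscal, vzero; ring]. }
      specialize (Hc H). fold (Bk k) in Hc. specialize (HPT k). specialize (HT k).
      apply (Rmult_le_reg_r (t k ^ 2 / 2)); auto. rewrite HPT. nra. }
    assert (HBc: Un_cv Bk B).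
    { assert (vcv (fun k => vsub vzero (wk k)) (vsub vzero w)).
      { apply coord_vcv. intros i. unfold vsub, vzero. apply CV_minus. apply Un_cv_const. apply vcv_coord; auto. }
      apply CV_minus. apply dot_cv; auto. apply CV_mult. apply Un_cv_const. apply dot_cv; auto. }
    destruct (proj1 D2 (-2 * B + 1) I) as [dl [Hdl Hdl2]].
    destruct (Un_cv_ev_gt Bk B (B - 1/2) HBc ltac:(lra)) as [N1 HN1].
    destruct (Un_cv_ev_lt0 t dl Htc Hdl Htp) as [N3 HN3].
    destruct (Hw dl Hdl) as [N4 HN4].
    set (k := max (max N0 N1) (max N3 N4)).
    specialize (HN1 k ltac:(lia)). specialize (HN3 k ltac:(lia)). specialize (HN4 k ltac:(lia)).
    specialize (Hdl2 (t k) (wk k) ltac:(split; [apply Htp|lra]) HN4).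
    rewrite (HqP k ltac:(lia)) in Hdl2. simpl in Hdl2. specialize (Hup k ltac:(lia)). lra.
  -
    exfalso.
    destruct (TED w XMInf D2 t Ht) as [w' [Hw' Hrec]]. simpl in Hrec.
    assert (HWc: Un_cv (fun k => - r * dot (w' k) (w' k)) (- r * dot w w)).
    { apply CV_mult. apply Un_cv_const. apply dot_cv; auto. }
    destruct (Un_cv_ev_gt _ _ (- r * dot w w - 1) HWc ltac:(lra)) as [N1 HN1].
    destruct (Hrec (- r * dot w w - 1)) as [N2 HN2].
    destruct (vcv_affine n xbar t w' w Htc Hw' eps He) as [N3 HN3].
    set (k := max N1 (max N2 N3)).
    specialize (HN1 k ltac:(lia)). specialize (HN2 k ltac:(lia)). specialize (HN3 k ltac:(lia)).
    pose proof (PR0 n f xbar fx r eps E PR L0 He _ (Rlt_le _ _ HN3)) as H0.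
    rewrite (vnorm_ext _ _ (vscal (t k) (w' k))) in H0 by (intros; unfold vsub, vadd, vscal; ring).
    rewrite vnorm_sq_scal in H0.
    rewrite q2_zero in HN2. destruct (f (vadd xbar (vscal (t k) (w' k)))) as [G|]; [|contradiction].
    cbn [ege elt] in H0, HN2. specialize (HT k).
    assert (HG: (G - fx) / (t k ^ 2 / 2) * (t k ^ 2 / 2) = G - fx) by (field; specialize (Htp k); lra).
    assert ((G - fx) / (t k ^ 2 / 2) * (t k ^ 2 / 2) < (- r * dot w w - 1) * (t k ^ 2 / 2)) by (apply Rmult_lt_compat_r; auto).
    assert ((- r * dot w w - 1) * (t k ^ 2 / 2) < - r * dot (w' k) (w' k) * (t k ^ 2 / 2)) by (apply Rmult_lt_compat_r; auto).
    nra.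
Qed.
Lemma vnorm_sym n (x y : vec n) : vnorm (vsub x y) = vnorm (vsub y x).
Proof. rewrite (vnorm_ext _ (vsub x y) (vscal (-1) (vsub y x))) by (intros; unfold vsub, vscal; ring).
  rewrite vnorm_scal. assert (Rabs (-1) = 1) by (rewrite Rabs_left; lra). rewrite H. ring. Qed.

Lemma vnorm_tri3 n (x y z : vec n) : vnorm (vsub x z) <= vnorm (vsub x y) + vnorm (vsub y z).
Proof. rewrite (vnorm_ext _ (vsub x z) (vadd (vsub x y) (vsub y z))) by (intros; unfold vsub, vadd; ring).
  apply vnorm_triangle. Qed.

Lemma dot_split n (y u x0 : vec n) : dot (vsub y x0) (vsub y x0) =
  dot (vsub y u) (vsub y u) + 2 * dot (vsub y u) (vsub u x0) + dot (vsub u x0) (vsub u x0).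
Proof. assert (H: forall i, vsub y x0 i = vadd (vsub y u) (vsub u x0) i) by (intros; unfold vsub, vadd; ring).
  rewrite (dot_ext _ _ _ _ _ H H). rewrite !dot_addl, !dot_addr, (dot_sym _ (vsub u x0) (vsub y u)). ring. Qed.

Lemma min_step n (f : vec n -> ereal) xbar fx r eps c x0 y0 :
  f xbar = EFin fx -> 0 < r -> 0 < eps -> PRineq n f xbar fx r eps -> lim_subdiff f xbar vzero -> lsc f ->
  0 < c <= 1 -> 0 < vnorm (vsub x0 xbar) < eps / 2 ->
  f x0 = EFin y0 -> y0 < fx + c * (vnorm (vsub x0 xbar))^2 ->
  exists u F, f u = EFin F /\ vnorm (vsub x0 xbar) / 2 <= vnorm (vsub u xbar) <= 3 * vnorm (vsub x0 xbar) / 2 /\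
    F - fx <= c * (vnorm (vsub x0 xbar))^2 /\ vnorm (vsub x0 u) <= vnorm (vsub x0 xbar) / 2 /\
    prox_subdiff f u (vscal (10 * r + 8) (vsub x0 u)).
Proof.
  intros E Hr He PR L0 Hlsc Hc [Hrho1 Hrho2] E0 Hy0.
  set (rho := vnorm (vsub x0 xbar)) in *. set (L := 10 * r + 8).
  set (psi := fun y => L / 2 * dot (vsub y x0) (vsub y x0)).
  assert (Hpsi: forall y, 0 <= psi y) by (intros; unfold psi; pose proof (dot_pos _ (vsub y x0)); unfold L; nra).
  set (lb := fx - r / 2 * eps ^ 2).
  assert (Hlb: forall y Fy, vnorm (vsub y xbar) <= eps -> f y = EFin Fy -> lb <= Fy).
  { intros y Fy Hy EF. pose proof (PR0 n f xbar fx r eps E PR L0 He y Hy). rewrite EF in H. simpl in H.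
    unfold lb. pose proof (vnorm_pos _ (vsub y xbar)). assert (vnorm (vsub y xbar) ^2 <= eps ^2) by nra. nra. }
  set (S := fun m => exists y, vnorm (vsub y xbar) <= eps /\ f y = EFin (ev (f y)) /\ m = ev (f y) + psi y).
  set (Em := fun m => S (- m)).
  assert (HS0: S (y0 + psi x0)).
  { exists x0. rewrite E0. split; [|split; reflexivity]. fold rho. lra. }
  destruct (completeness Em) as [M0 [Hub Hlub]].
  { exists (- lb). intros m [y [Hy [EF Hm]]]. pose proof (Hlb y _ Hy EF). pose proof (Hpsi y). lra. }
  { exists (- (y0 + psi x0)). unfold Em. rewrite Ropp_involutive. auto. }
  set (inf := - M0).
  assert (Hinf1: forall m, S m -> inf <= m).
  { intros m Hm. assert (Em (- m)) by (unfold Em; rewrite Ropp_involutive; auto). specialize (Hub _ H). unfold inf. lra. }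
  assert (Hinf2: forall e, 0 < e -> exists m, S m /\ m < inf + e).
  { intros e he. apply NNPP. intros C. assert (is_upper_bound Em (M0 - e)).
    { intros m Hm. destruct (Rle_dec m (M0 - e)); auto. exfalso. apply C. exists (- m). split; auto. unfold inf. lra. }
    specialize (Hlub _ H). lra. }
  assert (Hseq: forall k, exists y, vnorm (vsub y xbar) <= eps /\ f y = EFin (ev (f y)) /\ ev (f y) + psi y < inf + / (INR k + 1)).
  { intros k. destruct (Hinf2 (/ (INR k + 1))) as [m [[y [Hy [EF Hm]]] Hm2]].
    { apply Rinv_0_lt_compat. pose proof (pos_INR k). lra. }
    exists y. split; auto. split; auto. lra. }
  set (yk := fun k => proj1_sig (constructive_indefinite_description _ (Hseq k))).
  assert (Hyk: forall k, vnorm (vsub (yk k) xbar) <= eps /\ f (yk k) = EFin (ev (f (yk k))) /\ ev (f (yk k)) + psi (yk k) < inf + / (INR k + 1)).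
  { intros k. unfold yk. destruct (constructive_indefinite_description _ (Hseq k)); auto. }
  destruct (BWn n yk (vnorm xbar + eps)) as [phi [u [Hphi Hcv]]].
  { intros k. destruct (Hyk k) as [H1 _]. pose proof (vnorm_triangle _ (vsub (yk k) xbar) xbar).
    rewrite (vnorm_ext _ (vadd (vsub (yk k) xbar) xbar) (yk k)) in H by (intros; unfold vadd, vsub; ring). lra. }
  assert (HuB: vnorm (vsub u xbar) <= eps).
  { apply (Un_cv_le (fun k => vnorm (vsub (yk (phi k)) xbar))).
    - apply vnorm_cv. apply coord_vcv. intros i. unfold vsub. apply CV_minus. apply vcv_coord; auto. apply Un_cv_const.
    - exists 0%nat. intros k _. apply Hyk. }
  set (hu := psi u).
  assert (Hh: Un_cv (fun k => psi (yk (phi k))) hu).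
  { unfold hu, psi. apply CV_mult. apply Un_cv_const. apply dot_cv; apply coord_vcv; intros i; unfold vsub; apply CV_minus;
      try apply Un_cv_const; apply vcv_coord; auto. }
  assert (Hgh: Un_cv (fun k => ev (f (yk (phi k)))) (inf - hu)).
  { assert (Un_cv (fun k => ev (f (yk (phi k))) + psi (yk (phi k))) inf).
    { apply (Un_cv_squeeze _ (fun k => / (INR k + 1))); [|apply Un_cv_inv].
      intros k. destruct (Hyk (phi k)) as [H1 [H2 H3]].
      assert (S (ev (f (yk (phi k))) + psi (yk (phi k)))) by (exists (yk (phi k)); auto).
      specialize (Hinf1 _ H). rewrite Rabs_pos_eq by lra.
      assert (/ (INR (phi k) + 1) <= / (INR k + 1)).
      { apply Rinv_le_contravar. pose proof (pos_INR k); lra. apply Rplus_le_compat_r, le_INR, incr_ge; auto. }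
      lra. }
    apply (Un_cv_ext (fun k => (ev (f (yk (phi k))) + psi (yk (phi k))) - psi (yk (phi k))) _ (inf - hu)); [intros; ring|auto|].
    apply CV_minus; auto. }
  assert (Hu: exists F, f u = EFin F /\ F + hu <= inf).
  { apply NNPP. intros C.
    assert (Ha: exists a, inf - hu < a /\ egt (f u) a).
    { destruct (f u) as [F|] eqn:EF.
      - exists ((F + inf - hu) / 2). destruct (Rle_dec (F + hu) inf) as [h|h]. { exfalso. apply C. eauto. }
        simpl. split; lra.
      - exists (inf - hu + 1). simpl. split; auto. lra. }
    destruct Ha as [a [Ha1 Ha2]].
    destruct (Hlsc u a Ha2) as [dl [Hdl Hdl2]].
    destruct (Hcv dl Hdl) as [N1 HN1].
    destruct (Un_cv_ev_lt _ _ a Hgh Ha1) as [N2 HN2].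
    set (k := max N1 N2). specialize (HN1 k ltac:(lia)). specialize (HN2 k ltac:(lia)).
    specialize (Hdl2 _ HN1). destruct (Hyk (phi k)) as [_ [EF _]]. rewrite EF in Hdl2. simpl in Hdl2. lra. }
  destruct Hu as [F [EF HF]].
  assert (Hmin: forall y Fy, vnorm (vsub y xbar) <= eps -> f y = EFin Fy -> F + hu <= Fy + psi y).
  { intros y Fy Hy EFy. assert (S (Fy + psi y)) by (exists y; rewrite EFy; simpl; auto). specialize (Hinf1 _ H). lra. }
  set (e := vnorm (vsub x0 u)).
  assert (He0: 0 <= e) by apply vnorm_pos.
  assert (Hhu: hu = L / 2 * (e * e)).
  { unfold hu, psi. rewrite <- vnorm_sq. unfold e. rewrite (vnorm_sym _ x0 u). reflexivity. }
  assert (Hx0: F + hu <= y0).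
  { pose proof (Hmin x0 y0 ltac:(fold rho; lra) E0). unfold psi in H.
    rewrite (dot_ext _ (vsub x0 x0) vzero (vsub x0 x0) vzero) in H by (intros; unfold vsub, vzero; ring).
    rewrite dot_zerol in H. lra. }
  assert (HFl: fx - r / 2 * (vnorm (vsub u xbar))^2 <= F).
  { pose proof (PR0 n f xbar fx r eps E PR L0 He u HuB). rewrite EF in H. simpl in H. lra. }
  assert (Ht1: vnorm (vsub u xbar) <= e + rho).
  { unfold e, rho. rewrite vnorm_sym with (x := x0). apply vnorm_tri3. }
  assert (Ht2: rho <= e + vnorm (vsub u xbar)).
  { unfold e, rho. apply vnorm_tri3. }
  pose proof (vnorm_pos _ (vsub u xbar)).
  assert (He2: e < rho / 2).
  { destruct (Rlt_le_dec e (rho / 2)) as [h|h]; auto. exfalso.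
    assert (vnorm (vsub u xbar) ^ 2 <= (e + rho) ^ 2) by nra.
    assert (L / 2 * (e * e) < c * rho ^ 2 + r / 2 * (e + rho) ^2) by nra.
    assert (rho ^ 2 <= 4 * (e * e)) by nra.
    assert ((e + rho) ^ 2 <= 9 * (e * e)) by nra.
    assert (c * rho ^ 2 <= 4 * (e * e)) by nra.
    assert (r / 2 * (e + rho) ^ 2 <= r / 2 * (9 * (e * e))) by (apply Rmult_le_compat_l; lra).
    assert (0 < e * e) by nra.
    assert (0 < r * (e * e)) by nra.
    unfold L in *. lra. }
  exists u, F. split; auto. split; [split|split; [|split]].
  - lra.
  - lra.
  - assert (0 <= hu) by (rewrite Hhu; unfold L; nra). lra.
  - fold e. lra.
  - exists F. split; auto. exists (L / 2), (eps - 3 * rho / 2). split; [lra|].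
    intros y [Hy1 Hy2].
    assert (HyB: vnorm (vsub y xbar) <= eps).
    { pose proof (vnorm_tri3 _ y u xbar). lra. }
    destruct (f y) as [Fy|] eqn:EFy; simpl; auto.
    pose proof (Hmin y Fy HyB EFy). unfold psi, hu, psi in H0.
    rewrite (dot_split _ y u x0) in H0.
    rewrite Rmult_1_r, vnorm_sq.
    assert (dot (vscal L (vsub x0 u)) (vsub y u) = - L * dot (vsub y u) (vsub u x0)).
    { rewrite dot_scall, dot_sym. rewrite (dot_ext _ (vsub y u) (vsub y u) (vsub x0 u) (vscal (-1) (vsub u x0))); auto.
      rewrite dot_scalr. ring. intros; unfold vsub, vscal; ring. }
    rewrite H1. lra.
Qed.
Lemma pos_dec_inv : pos_dec_to0 (fun k => / (INR k + 1)).
Proof. split; [|split].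
  - intros k. apply Rinv_0_lt_compat. pose proof (pos_INR k). lra.
  - intros k. apply Rinv_le_contravar. pose proof (pos_INR k). lra. rewrite S_INR. lra.
  - apply Un_cv_inv. Qed.

Lemma forward n (f : vec n -> ereal) xbar fx k0 d0 w d :
  f xbar = EFin fx -> 0 < d0 ->
  (forall x, vnorm (vsub x xbar) < d0 -> ege (f x) (fx + k0 / 2 * (vnorm (vsub x xbar))^2)) ->
  twice_epi_diff f xbar vzero -> is_d2 f xbar vzero fx w (XFin d) -> k0 * dot w w <= d.
Proof.
  intros E Hd0 Hmin [fx' [E' TED]] D2. rewrite E in E'; injection E' as <-.
  set (tau := fun k => / (INR k + 1)).
  pose proof pos_dec_inv as Htau. fold tau in Htau. destruct Htau as [Htp [_ Htc]].
  destruct (TED w (XFin d) D2 tau pos_dec_inv) as [w' [Hw' Hrec]]. simpl in Hrec.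
  set (Q := fun k => ev (q2 f xbar vzero fx (tau k) (w' k))).
  assert (HQc: Un_cv Q d).
  { intros e' he'. destruct (Hrec e' he') as [N HN]. exists N. intros k Hk. destruct (HN k Hk) as [rr [Er Hr']].
    unfold Q, Rdist. rewrite Er. simpl. auto. }
  assert (HD: Un_cv (fun k => Q k - k0 * dot (w' k) (w' k)) (d - k0 * dot w w)).
  { apply CV_minus; auto. apply CV_mult. apply Un_cv_const. apply dot_cv; auto. }
  assert (0 <= d - k0 * dot w w); [|lra].
  apply (Un_cv_ge _ _ _ HD).
  destruct (Hrec 1 ltac:(lra)) as [N1 HN1].
  destruct (vcv_affine n xbar tau w' w Htc Hw' d0 Hd0) as [N2 HN2].
  exists (max N1 N2). intros k Hk.
  destruct (HN1 k ltac:(lia)) as [qq [Eq _]]. specialize (HN2 k ltac:(lia)).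
  specialize (Hmin _ HN2).
  rewrite (vnorm_ext _ _ (vscal (tau k) (w' k))) in Hmin by (intros; unfold vsub, vadd, vscal; ring).
  rewrite vnorm_sq_scal in Hmin.
  unfold Q. rewrite q2_zero in *.
  destruct (f (vadd xbar (vscal (tau k) (w' k)))) as [G|]; [|discriminate].
  cbn [ege ev] in *. specialize (Htp k).
  assert (HT: 0 < tau k ^ 2 / 2) by nra.
  assert (k0 * dot (w' k) (w' k) <= (G - fx) / (tau k ^ 2 / 2)); [|lra].
  apply (Rmult_le_reg_r (tau k ^ 2 / 2)); auto.
  replace ((G - fx) / (tau k ^ 2 / 2) * (tau k ^ 2 / 2)) with (G - fx) by (field; lra). nra.
Qed.

Theorem corollary3p9 (n : nat) (f : vec n -> ereal) (xbar : vec n) :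
  proper f -> lsc f -> in_dom f xbar -> lim_subdiff f xbar vzero ->
  subdiff_continuous f xbar vzero -> prox_regular f xbar vzero ->
  twice_epi_diff f xbar vzero ->
  (strong_local_min f xbar <->
   exists kappa, 0 < kappa /\
     forall w, dom_graph_deriv_prox f xbar vzero w -> vnorm w = 1 ->
       exists z, graph_deriv_prox f xbar vzero w z /\ kappa <= dot z w).
Proof.
  intros _ Hlsc _ L0 SC [fx [E [r [eps [Hr [He PR]]]]]] TED.
  change (PRineq n f xbar fx r eps) in PR.
  split.
  - intros [fx1 [E1 [k0 [d0 [Hk0 [Hd0 Hmin]]]]]]. rewrite E in E1; injection E1 as <-.
    exists k0. split; auto. intros w [z Hz] Hw1. exists z. split; auto.
    destruct (d2_exists n f xbar vzero fx w) as [a Ha].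
    destruct (keyE n f xbar fx r eps w z a E Hr He PR SC TED L0 Ha Hz) as [d [Ea Ed]]. subst a.
    rewrite Ed. pose proof (forward n f xbar fx k0 d0 w d E Hd0 Hmin TED Ha).
    rewrite <- vnorm_sq, Hw1 in H. lra.
  - intros [kap [Hk Hcond]]. apply NNPP. intros Hns.
    set (c := Rmin (kap / 16) 1). set (L := 10 * r + 8).
    assert (Hc: 0 < c <= 1) by (unfold c; split; [apply Rmin_pos; lra|apply Rmin_r]).
    assert (Hc2: c <= kap / 16) by apply Rmin_l.
    assert (Hbad: forall dl, 0 < dl -> exists x y, 0 < vnorm (vsub x xbar) < dl /\ f x = EFin y /\ y < fx + c * (vnorm (vsub x xbar))^2).
    { intros dl Hdl. apply NNPP. intros C. apply Hns. exists fx. split; auto. exists (2 * c), dl. split; [lra|split; auto].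
      intros x Hx. destruct (f x) as [y|] eqn:Ey; simpl; auto.
      destruct (Rlt_le_dec y (fx + c * (vnorm (vsub x xbar))^2)) as [h|h].
      - exfalso. apply C. exists x, y. split; auto. split; auto. pose proof (vnorm_pos _ (vsub x xbar)).
        destruct (Req_dec (vnorm (vsub x xbar)) 0) as [h0|h0]; [|lra].
        apply vnorm0_eq in h0. subst x. rewrite E in Ey. injection Ey as <-. rewrite vsub_self in h. lra.
      - lra. }
    assert (Hj: forall j, exists uv : (vec n * vec n)%type,
       (0 < vnorm (vsub (fst uv) xbar) < 3 / 2 * / (INR j + 1)) /\ prox_subdiff f (fst uv) (snd uv) /\
       vnorm (snd uv) <= L * vnorm (vsub (fst uv) xbar) /\
       exists F, f (fst uv) = EFin F /\ F - fx <= 4 * c * (vnorm (vsub (fst uv) xbar))^2).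
    { intros j. set (dl := Rmin (eps / 4) (/ (INR j + 1))).
      assert (Hdl: 0 < dl) by (unfold dl; apply Rmin_pos; [lra|apply Rinv_0_lt_compat; pose proof (pos_INR j); lra]).
      assert (Hdl1: dl <= eps / 4) by apply Rmin_l. assert (Hdl2: dl <= / (INR j + 1)) by apply Rmin_r.
      destruct (Hbad dl Hdl) as [x0 [y0 [[H1 H2] [H3 H4]]]].
      destruct (min_step n f xbar fx r eps c x0 y0 E Hr He PR L0 Hlsc Hc ltac:(split; lra) H3 H4)
        as [u [F [EF [[Hu1 Hu2] [HF [He0 Hp]]]]]].
      exists (u, vscal L (vsub x0 u)). simpl. split; [split; lra|]. split; auto. split.
      - rewrite vnorm_scal. rewrite Rabs_pos_eq by (unfold L; lra). apply Rmult_le_compat_l; [unfold L; lra|]. lra.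
      - exists F. split; auto. pose proof (vnorm_pos _ (vsub x0 xbar)).
        assert (vnorm (vsub x0 xbar) ^ 2 <= 4 * vnorm (vsub u xbar) ^ 2) by nra. nra. }
    set (uv := fun j => proj1_sig (constructive_indefinite_description _ (Hj j))).
    assert (Huv: forall j, (0 < vnorm (vsub (fst (uv j)) xbar) < 3 / 2 * / (INR j + 1)) /\ prox_subdiff f (fst (uv j)) (snd (uv j)) /\
       vnorm (snd (uv j)) <= L * vnorm (vsub (fst (uv j)) xbar) /\
       exists F, f (fst (uv j)) = EFin F /\ F - fx <= 4 * c * (vnorm (vsub (fst (uv j)) xbar))^2).
    { intros j. unfold uv. destruct (constructive_indefinite_description _ (Hj j)); auto. }
    set (u := fun j => fst (uv j)). set (v := fun j => snd (uv j)).
    set (tau := fun j => vnorm (vsub (u j) xbar)).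
    set (w' := fun j => vscal (/ tau j) (vsub (u j) xbar)).
    set (z' := fun j => vscal (/ tau j) (v j)).
    assert (Htp: forall j, 0 < tau j) by (intros j; apply (Huv j)).
    assert (Htc: Un_cv tau 0).
    { apply (Un_cv_squeeze _ (fun j => 3 / 2 * / (INR j + 1))).
      - intros j. destruct (Huv j) as [[h1 h2] _]. rewrite Rminus_0_r, Rabs_pos_eq; unfold tau, u; lra.
      - apply (Un_cv_ext (fun j => 3 / 2 * / (INR j + 1)) _ (3 / 2 * 0)); auto; [ring|].
        apply CV_mult. apply Un_cv_const. apply Un_cv_inv. }
    assert (Hw'n: forall j, vnorm (w' j) = 1).
    { intros j. unfold w'. rewrite vnorm_scal. rewrite Rabs_pos_eq by (left; apply Rinv_0_lt_compat; auto).
      fold (tau j). field. specialize (Htp j). lra. }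
    assert (Hz'n: forall j, vnorm (z' j) <= L).
    { intros j. unfold z'. rewrite vnorm_scal. rewrite Rabs_pos_eq by (left; apply Rinv_0_lt_compat; auto).
      destruct (Huv j) as [_ [_ [h _]]]. fold (v j) (u j) (tau j) in h. specialize (Htp j).
      apply (Rmult_le_reg_l (tau j)); auto. rewrite <- Rmult_assoc, Rinv_r by lra. lra. }
    destruct (triple_extract n tau w' z' 1 L Htp Htc ltac:(intros; rewrite Hw'n; lra) Hz'n)
      as [phi [w0 [z0 [Hphi [Hpd [Hcw Hcz]]]]]].
    assert (Hpt: forall j, vadd xbar (vscal (tau j) (w' j)) = u j).
    { intros j. apply vec_eq. intros i. unfold vadd, w'. unfold vscal, vsub. field. specialize (Htp j). lra. }
    assert (Hgraph: graph_deriv_prox f xbar vzero w0 z0).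
    { exists (fun k => tau (phi k)), (fun k => w' (phi k)), (fun k => z' (phi k)).
      split; auto. split; auto. split; auto. intros k. rewrite Hpt.
      assert (vadd vzero (vscal (tau (phi k)) (z' (phi k))) = v (phi k)).
      { apply vec_eq. intros i. unfold vadd, z'. unfold vscal, vzero. field. specialize (Htp (phi k)). lra. }
      rewrite H. apply (Huv (phi k)). }
    assert (Hw0: vnorm w0 = 1).
    { pose proof (vnorm_cv _ _ _ Hcw) as C. apply Rle_antisym.
      - apply (Un_cv_le _ _ _ C). exists 0%nat. intros k _. rewrite Hw'n. lra.
      - apply (Un_cv_ge _ _ _ C). exists 0%nat. intros k _. rewrite Hw'n. lra. }
    destruct (Hcond w0 (ex_intro _ z0 Hgraph) Hw0) as [z1 [Hz1 Hkz]].
    destruct (d2_exists n f xbar vzero fx w0) as [a Ha].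
    destruct (keyE n f xbar fx r eps w0 z1 a E Hr He PR SC TED L0 Ha Hz1) as [d [Ea Ed]]. subst a.
    destruct (proj1 Ha (kap / 2) ltac:(simpl; lra)) as [dl [Hdl Hdl2]].
    destruct Hpd as [Hpd1 [_ Hpd3]].
    destruct (Un_cv_ev_lt0 _ dl Hpd3 Hdl Hpd1) as [N1 HN1].
    destruct (Hcw dl Hdl) as [N2 HN2].
    set (k := max N1 N2). specialize (HN1 k ltac:(lia)). specialize (HN2 k ltac:(lia)).
    specialize (Hdl2 _ _ ltac:(split; [apply Hpd1|exact HN1]) HN2).
    rewrite q2_zero, Hpt in Hdl2.
    destruct (Huv (phi k)) as [_ [_ [_ [F [EF HF]]]]]. fold (u (phi k)) (tau (phi k)) in EF, HF.
    rewrite EF in Hdl2. cbn [egt] in Hdl2.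
    specialize (Htp (phi k)).
    assert (HT: 0 < tau (phi k) ^ 2 / 2) by nra.
    assert ((F - fx) / (tau (phi k) ^ 2 / 2) <= 8 * c).
    { apply (Rmult_le_reg_r (tau (phi k) ^ 2 / 2)); auto.
      replace ((F - fx) / (tau (phi k) ^ 2 / 2) * (tau (phi k) ^ 2 / 2)) with (F - fx) by (field; lra). nra. }
    lra.
Qed.
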